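(* Let $u:V\to[0,1]$ and suppose $q^*\in\arg\max_{\|q\|_\infty\le1}\sum_{x\in V}u(x)(\mathrm{div}_wq)(x)$. For $\alpha\in(0,1]$ define $u^\alpha(x)=1$ if $u(x)\ge\alpha$ and $u^\alpha(x)=0$ otherwise. Then for almost every threshold level $\alpha\in(0,1]$, $q^*$ also satisfies $q^*\in\arg\max_{\|q\|_\infty\le1}\sum_{x\in V}u^\alpha(x)(\mathrm{div}_wq)(x)$.
   Context: Let $G=(V,E)$ be a finite undirected graph with symmetric weights $w(x,y)=w(y,x)>0$ for $\{x,y\}\in E$ and $w(x,y)=0$ otherwise. For $q:V\times V\to\mathbb{R}$, $(\mathrm{div}_wq)(x)=\frac12\sum_{y\in V}w(x,y)(q(x,y)-q(y,x))$ and $\|q\|_\infty=\max_{x,y\in V}|q(x,y)|$; the maximization is over all $q:V\times V\to\mathbb{R}$ with $\|q\|_\infty\le1$. *)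

(* Defs.v *)
From HB Require Import structures.
From mathcomp Require Import all_boot all_order all_algebra.
From mathcomp Require Import all_classical all_reals all_analysis.
Set Implicit Arguments. Unset Strict Implicit. Unset Printing Implicit Defensive.
Import Order.TTheory GRing.Theory Num.Theory.
Local Open Scope ring_scope.

Section Defs.
Variables (R : realType) (V : finType).

Definition divw (w : V -> V -> R) (q : V -> V -> R) (x : V) : R :=
  2^-1 * \sum_(y : V) w x y * (q x y - q y x).

Definition linf (q : V -> V -> R) : R :=
  \big[Num.max/0]_(p : V * V) `|q p.1 p.2|.

Definition objective (w : V -> V -> R) (u : V -> R) (q : V -> V -> R) : R :=
  \sum_(x : V) u x * divw w q x.

Definition is_argmax (w : V -> V -> R) (u : V -> R) (qs : V -> V -> R) : Prop :=
  linf qs <= 1 /\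
  forall q : V -> V -> R, linf q <= 1 -> objective w u q <= objective w u qs.

Definition thresh (u : V -> R) (alpha : R) (x : V) : R :=
  if alpha <= u x then 1 else 0.

End Defs.

(* Main.v *)
Require Import Defs.
From HB Require Import structures.
From mathcomp Require Import all_boot all_order all_algebra.
From mathcomp Require Import all_classical all_reals all_analysis.
From mathcomp Require Import ring lra.
Import Order.TTheory GRing.Theory Num.Theory.
Local Open Scope classical_set_scope.
Local Open Scope ring_scope.

Section Aux.
Variables (R : realType) (V : finType).

Lemma le_linf (q : V -> V -> R) a b : `|q a b| <= linf q.
Proof.
rewrite /linf.
have : (a, b) \in index_enum (prod V V) by rewrite mem_index_enum.
elim: (index_enum _) => [//|p s IH]; rewrite in_cons big_cons le_max.
case/orP => [/eqP <-|/IH ->]; last by rewrite orbT.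
by rewrite lexx.
Qed.

Lemma linf_le1 (q : V -> V -> R) : (forall a b, `|q a b| <= 1) -> linf q <= 1.
Proof.
move=> H; rewrite /linf; apply: (big_ind (fun r => r <= 1)) => //.
by move=> x y hx hy; rewrite ge_max hx hy.
Qed.

Lemma objE (w : V -> V -> R) (ws : forall x y, w x y = w y x) v q :
  objective w v q = 2^-1 * \sum_x \sum_y w x y * q x y * (v x - v y).
Proof.
rewrite /objective /divw.
under eq_bigr => x _ do rewrite mulrCA.
rewrite -mulr_sumr; congr (_ * _).
transitivity (\sum_x \sum_y (v x * (w x y * q x y)) - \sum_x \sum_y (v x * (w x y * q y x))).
  rewrite -sumrB; apply: eq_bigr => x _; rewrite mulr_sumr -sumrB.
  by apply: eq_bigr => y _; rewrite mulrBr mulrBr.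
rewrite [X in _ - X]exchange_big /=.
rewrite -sumrB; apply: eq_bigr => x _; rewrite -sumrB.
by apply: eq_bigr => y _; rewrite ws; ring.
Qed.

Lemma obj_bound (w : V -> V -> R) (ws : forall x y, w x y = w y x)
  (w0 : forall x y, 0 <= w x y) v q : linf q <= 1 ->
  objective w v q <= 2^-1 * \sum_x \sum_y w x y * `|v x - v y|.
Proof.
move=> hq; rewrite objE //; rewrite ler_pM2l ?invr_gt0 ?ltr0n //.
apply: ler_sum => x _; apply: ler_sum => y _.
rewrite -mulrA ler_wpM2l //.
apply: le_trans (ler_norm _) _.
rewrite normrM -[X in _ <= X]mul1r ler_wpM2r //.
exact: le_trans (le_linf q x y) hq.
Qed.

End Aux.
Arguments le_linf {R V}.
Arguments linf_le1 {R V}.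
Arguments objE {R V}.
Arguments obj_bound {R V}.

Theorem lemma1 (R : realType) (V : finType) (w : V -> V -> R)
  (w_sym : forall x y, w x y = w y x) (w_ge0 : forall x y, 0 <= w x y)
  (u : V -> R) (u01 : forall x, 0 <= u x <= 1)
  (qs : V -> V -> R) (hqs : is_argmax w u qs) :
  (@lebesgue_measure R).-negligible
    [set alpha : R | 0 < alpha <= 1 /\ ~ is_argmax w (thresh u alpha) qs].
Proof.
case: hqs => hqs1 hqs2.
have slack0 : forall x y, w x y * (`|u x - u y| - qs x y * (u x - u y)) = 0.
  pose qh := fun x y => Num.sg (u x - u y).
  have hqh : linf qh <= 1.
    apply: linf_le1 => a b; rewrite /qh normr_sg; case: (_ != 0) => //.
  have := hqs2 _ hqh; rewrite !objE // ler_pM2l ?invr_gt0 ?ltr0n // => H.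
  have nn : forall x y, 0 <= w x y * (`|u x - u y| - qs x y * (u x - u y)).
    move=> x y; apply: mulr_ge0 => //; rewrite subr_ge0.
    apply: le_trans (ler_norm _) _; rewrite normrM -[X in _ <= X]mul1r ler_wpM2r //.
    exact: le_trans (le_linf qs x y) hqs1.
  have tot : \sum_x \sum_y w x y * (`|u x - u y| - qs x y * (u x - u y)) = 0.
    apply/eqP; rewrite eq_le; apply/andP; split; last first.
      by apply: sumr_ge0 => x _; apply: sumr_ge0 => y _.
    have -> : \sum_x \sum_y w x y * (`|u x - u y| - qs x y * (u x - u y)) =
      \sum_x \sum_y w x y * qh x y * (u x - u y) -
      \sum_x \sum_y w x y * qs x y * (u x - u y).
      rewrite -sumrB; apply: eq_bigr => x _; rewrite -sumrB.
      by apply: eq_bigr => y _; rewrite /qh -mulrA -normrEsg; ring.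
    by rewrite subr_le0.
  move=> x y.
  have := psumr_eq0P (fun x _ => sumr_ge0 _ (fun y _ => nn x y)) tot.
  move=> /(_ x isT) H2.
  by move/psumr_eq0P: H2 => ->.
have good : forall alpha, is_argmax w (thresh u alpha) qs.
  move=> alpha; split => // q hq.
  apply: (le_trans (obj_bound _ w_sym w_ge0 _ _ hq)).
  rewrite objE // ler_pM2l ?invr_gt0 ?ltr0n //.
  apply: ler_sum => x _; apply: ler_sum => y _.
  rewrite /thresh; have := slack0 x y.
  case: ifP => hx; case: ifP => hy; rewrite ?subrr ?normr0 ?mulr0 //.
  - have lt : u y < u x by rewrite (lt_le_trans _ hx) // ltNge hy.
    rewrite gtr0_norm ?subr_gt0 // -[X in X - _]mul1r -mulrBl mulrA => /eqP.
    rewrite mulf_eq0 subr_eq0 (gt_eqF lt) orbF mulrBr mulr1 => /eqP H.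
    rewrite subr0 normr1 !mulr1.
    by move/eqP: H; rewrite subr_eq0 => /eqP <-.
  - have lt : u x < u y by rewrite (lt_le_trans _ hy) // ltNge hx.
    rewrite ltr0_norm ?subr_lt0 // -[X in X - _]mulN1r -mulrBl mulrA => /eqP.
    rewrite mulf_eq0 subr_eq0 (lt_eqF lt) orbF mulrBr mulrN1 => /eqP H.
    rewrite sub0r normrN normr1 mulr1 mulrN1.
    by move/eqP: H; rewrite subr_eq0 => /eqP <-; rewrite opprK.
suff -> : [set alpha : R | 0 < alpha <= 1 /\ ~ is_argmax w (thresh u alpha) qs] = set0.
  exact: negligible_set0.
by apply/seteqP; split => a //= [_ /(_ (good a))].
Qed.
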